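(* For all integers $m\ge0$ and $n\ge0$, $$v_m^{(n)}(Y)=\frac{(-1)^m}{m!}\,U(Y)^{bm-m-n+1}\,w_{m+n,bm}(Y).$$
   Context: Let $a,b\ge2$ be integers, $R$ a $\mathbb{Q}$-algebra, $u_0,\ldots,u_a\in R$, and $U(Y)=\sum_{j=0}^au_jY^j\in R[Y]$. Let $I(Y,Z)\in R[[Z]][Y]$ be the formal inverse of $Y+ZU(Y)^b$, i.e. the unique element with $I(Y+ZU(Y)^b,Z)=Y$, and define $v_k(Y)\in R[Y]$ by $U(I(Y,Z))=\sum_{k\ge0}v_k(Y)Z^k$. For each integer $\lambda\ge0$ define $w_{n,\lambda}(Y)\in R[Y]$ recursively by $w_{0,\lambda}(Y)=1/(\lambda+1)$ and $w_{n,\lambda}(Y)=(\lambda-n+2)U'(Y)w_{n-1,\lambda}(Y)+U(Y)w_{n-1,\lambda}'(Y)$ for $n\ge1$. The superscript $(n)$ denotes the $n$-th derivative in $Y$. (When the exponent $bm-m-n+1$ is negative, the right-hand side involves negative powers of $U(Y)$, i.e. it is a formal expression in which $U(Y)$ is inverted.) *)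

(* Defs.v *)
From HB Require Import structures.
From mathcomp Require Import all_boot all_order all_algebra.
Set Implicit Arguments. Unset Strict Implicit. Unset Printing Implicit Defensive.
Import GRing.Theory.
Local Open Scope ring_scope.

(* Polynomials in Z with coefficients in R[Y] are
   elements of {poly {poly R}}: the outer variable 'X is Z and
   Y is represented by ('X : {poly R})%:P. *)

Section Defs.
Variable R : comUnitRingType.

Definition is_Q_algebra : Prop := forall k : nat, (k.+1)%:R \is a @GRing.unit R.

Definition trunc_series (I : nat -> {poly R}) (K : nat) : {poly {poly R}} :=
  \sum_(k < K.+1) (I k)%:P * 'X^k.

(* I(Y,Z) = sum_k I k (Y) Z^k is the formal inverse of Y + Z U(Y)^b, i.e.
   I(Y + Z U(Y)^b, Z) = Y in R[Y][[Z]] (checked coefficientwise in Z;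
   only the terms k <= N contribute to the coefficient of Z^N). *)
Definition is_formal_inverse (U : {poly R}) (b : nat) (I : nat -> {poly R}) : Prop :=
  forall N : nat,
    (\sum_(k < N.+1) 'X^k *
       ((I k) ^:P \Po (('X : {poly R})%:P + 'X * (U ^+ b)%:P)))`_N
    = (if N == 0%N then 'X else 0).

(* v_k(Y) = coefficient of Z^k in U(I(Y,Z)). *)
Definition vcoef (U : {poly R}) (I : nat -> {poly R}) (k : nat) : {poly R} :=
  ((map_poly (fun c : R => c%:P%:P) U).[trunc_series I k])`_k.

Fixpoint wpoly (U : {poly R}) (lam : nat) (n : nat) : {poly R} :=
  match n with
  | 0%N => ((lam.+1)%:R)^-1 %:P
  | n'.+1 => ((lam%:Z - n'%:Z + 1)%:~R : R) *: (U^`() * wpoly U lam n')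
             + U * (wpoly U lam n')^`()
  end.

End Defs.

(* Main.v *)
Require Import Defs.
From HB Require Import structures.
From mathcomp Require Import all_boot all_order all_algebra.
From mathcomp Require Import ring.
Import GRing.Theory.
Local Open Scope ring_scope.
Section Main.
Variable R : comUnitRingType.
Variables (U : {poly R}) (b : nat).
Let W := U ^+ b.
Let q : {poly {poly R}} := ('X : {poly R})%:P + 'X * (U ^+ b)%:P.
Definition s0 : {poly R} -> {poly {poly R}} := comp_poly q \o map_poly polyC.
HB.instance Definition _ := GRing.RMorphism.on s0.

Lemma s0_coef c j : (s0 c)`_j = W ^+ j * c^`N(j).
Proof.
rewrite /s0 /= /comp_poly /q.
pose n := maxn (size ((c^:P)^:P)) j.+1.
rewrite (@nderiv_taylor_wide _ n); last by rewrite leq_maxl.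
  rewrite coef_sum (bigD1 (Ordinal (leq_maxr (size ((c^:P)^:P)) j.+1))) //= big1.
    rewrite addr0 !nderivn_map horner_map /= -/(comp_poly 'X _) comp_polyXr.
    by rewrite exprMn -rmorphXn /= coefCM coefXnM ltnn subnn coefC /= mulrC.
  move=> i /negbTE ne.
  rewrite !nderivn_map horner_map /= -/(comp_poly 'X _) comp_polyXr.
  rewrite exprMn -rmorphXn /= coefCM coefXnM.
  case: ltnP => h1; first by rewrite mulr0.
  rewrite coefC subn_eq0.
  case: (leqP j i) => h2; last by rewrite mulr0.
  have eij : (i : nat) = j by apply/eqP; rewrite eqn_leq h1 h2.
  by move: ne; rewrite -(inj_eq val_inj) /= eij eqxx.
exact: mulrC.
Qed.

Definition Sg (g : nat -> {poly R}) K := \sum_(k < K.+1) 'X^k * s0 (g k).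
Definition Eg (g : nat -> {poly R}) N := \sum_(k < N.+1) W ^+ (N - k) * (g k)^`N(N - k).

Lemma Sg_coef g K N : (N <= K)%N -> (Sg g K)`_N = Eg g N.
Proof.
move=> NK; rewrite /Sg /Eg coef_sum.
rewrite (big_ord_widen K.+1 (fun k => W ^+ (N - k) * (g k)^`N(N - k))) //.
rewrite [RHS]big_mkcond; apply: eq_bigr => k _.
by rewrite coefXnM s0_coef ltnS ltnNge; case: leqP.
Qed.

Lemma Eg_uniq g h T : (forall N, Eg g N = T N) -> (forall N, Eg h N = T N) ->
  forall k, g k = h k.
Proof.
move=> Hg Hh; elim/ltn_ind => N IH.
have := Hg N; rewrite -(Hh N) /Eg !big_ord_recr /= subnn expr0 !mul1r !nderivn0.
set A := (X in X + _ = _ -> _); set B := (X in _ = X + _ -> _).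
have -> : A = B by apply: eq_bigr => k _; rewrite IH.
exact: addrI.
Qed.

Definition sig : {poly {poly R}} -> {poly {poly R}} := horner_eval 'X \o map_poly s0.
HB.instance Definition _ := GRing.RMorphism.on sig.

Lemma sigC (c : {poly R}) : sig c%:P = s0 c.
Proof. by rewrite /sig /= map_polyC /= horner_evalE hornerC. Qed.

Lemma sigX : sig 'X = 'X.
Proof. by rewrite /sig /= map_polyX /= horner_evalE hornerX. Qed.

Lemma sigCC (c : R) : sig (c%:P)%:P = (c%:P)%:P.
Proof. by rewrite sigC /s0 /= map_polyC /= comp_polyC. Qed.

Lemma sig_trunc (g : nat -> {poly R}) K : sig (trunc_series g K) = Sg g K.
Proof.
rewrite /trunc_series /Sg rmorph_sum; apply: eq_bigr => k _.
by rewrite rmorphM rmorphXn /= (sigC (g k)) sigX mulrC.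
Qed.

Lemma trunc_coef (g : nat -> {poly R}) K N : (trunc_series g K)`_N = if (N <= K)%N then g N else 0.
Proof.
rewrite /trunc_series coef_sum.
case: leqP => NK.
  rewrite (bigD1 (Ordinal (NK : (N < K.+1)%N))) //= big1.
    by rewrite coefCM coefXn eqxx mulr1 addr0.
  move=> i ne; rewrite coefCM coefXn.
  by move: ne; rewrite -(inj_eq val_inj) /= eq_sym => /negbTE ->; rewrite mulr0.
rewrite big1 // => i _; rewrite coefCM coefXn.
have : (N != i) by rewrite neq_ltn (leq_ltn_trans (leq_ord i) NK) orbT.
by move=> /negbTE ->; rewrite mulr0.
Qed.

Definition cong K (A B : {poly {poly R}}) := forall N, (N <= K)%N -> A`_N = B`_N.

Lemma congM K A B A' B' : cong K A B -> cong K A' B' -> cong K (A * A') (B * B').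
Proof.
move=> h h' N NK; rewrite !coefM; apply: eq_bigr => i _.
rewrite h ?h' //; first exact: leq_trans (leq_subr _ _) NK.
exact: leq_trans (leq_ord i) NK.
Qed.

Lemma cong_horner K (p : {poly {poly {poly R}}}) A B :
  cong K A B -> cong K p.[A] p.[B].
Proof.
move=> h; elim/poly_ind: p => [|p c IH]; first by move=> N _; rewrite !horner0.
move=> N NK; rewrite !hornerMXaddC !coefD (@congM K _ _ _ _ IH h N NK) //.
Qed.

Lemma sig_cong K A B : cong K A B -> cong K (sig A) (sig B).
Proof.
move=> h.
have ht : take_poly K.+1 A = take_poly K.+1 B.
  by apply/polyP => i; rewrite !coef_take_poly; case: ltnP => // /h ->.
rewrite -(poly_take_drop K.+1 A) -(poly_take_drop K.+1 B) ht.
move=> N NK; rewrite !rmorphD !rmorphM !coefD !rmorphXn /= sigX !coefMXn ltnS NK //.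
Qed.

Lemma Ev (I : nat -> {poly R}) : is_formal_inverse U b I ->
  forall K, Eg (vcoef U I) K = if K == 0%N then U else 0.
Proof.
move=> H K.
have hI N : Eg I N = if N == 0%N then 'X else 0.
  rewrite -(@Sg_coef I N N (leqnn N)); exact: H N.
set Ucc := map_poly (fun c : R => (c%:P)%:P) U.
have hT : cong K (sig (trunc_series I K)) ('X : {poly R})%:P.
  by move=> N NK; rewrite sig_trunc Sg_coef // hI coefC.
have hsig A : sig Ucc.[A] = Ucc.[sig A].
  rewrite -horner_map; congr (_.[_]); rewrite -map_poly_comp.
  by apply: eq_map_poly => c /=; rewrite sigCC.
have hY : Ucc.[('X : {poly R})%:P] = U%:P.
  rewrite /Ucc (map_poly_comp polyC polyC) horner_map /=.
  by rewrite -/(comp_poly 'X U) comp_polyXr.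
have hv : cong K (trunc_series (vcoef U I) K) Ucc.[trunc_series I K].
  move=> N NK; rewrite trunc_coef NK /vcoef -/Ucc.
  apply: (@cong_horner N) => //.
  by move=> j jN; rewrite !trunc_coef jN (leq_trans jN NK).
rewrite -(@Sg_coef _ K K (leqnn K)) -sig_trunc (@sig_cong K _ _ hv K) // hsig.
by rewrite (@cong_horner K _ _ _ hT K) // hY coefC.
Qed.

Definition Tn N n (F : {poly R}) := \sum_(k < N.+1)
   ((-1) ^+ k *+ 'C(N, k)) *: (W ^+ (N - k) * (W ^+ k * F)^`(n)).

Lemma Tn_rec M n F : (Tn M.+1 n F)^`() =
  Tn M.+1 n.+1 F + (W^`() * Tn M n F) *+ M.+1.
Proof.
rewrite /Tn raddf_sum /=.
have -> : \sum_(k < M.+2) (((-1) ^+ k *+ 'C(M.+1, k)) *: (W ^+ (M.+1 - k) * (W ^+ k * F)^`(n)))^`()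
  = \sum_(k < M.+2) ((-1) ^+ k *+ 'C(M.+1, k)) *: (W ^+ (M.+1 - k) * (W ^+ k * F)^`(n.+1))
  + \sum_(k < M.+2) ((-1) ^+ k *+ 'C(M.+1, k)) *: ((W ^+ (M.+1 - k))^`() * (W ^+ k * F)^`(n)).
  rewrite -big_split /=; apply: eq_bigr => k _.
  by rewrite derivZ derivM -derivnS scalerDr addrC.
congr (_ + _).
rewrite big_ord_recr /= subnn expr0 derivC mul0r scaler0 addr0.
rewrite mulr_sumr -sumrMnl; apply: eq_bigr => k _.
rewrite deriv_exp subSn ?(leq_ord k) //=.
rewrite mulrnAl -scalerMnr scalerMnl -scalerAr -!scalerMnl -!mulrnA mulrA.
congr (_ *+ _).
have := mul_bin_down M.+1 k; rewrite /= subSn ?(leq_ord k) // mulnC => ->.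
by rewrite mulnC.
Qed.

Lemma Tn_zero n : forall N F, (n < N)%N -> Tn N n F = 0.
Proof.
elim: n => [|n IH] N F nN.
  rewrite /Tn (eq_bigr (fun k : 'I_N.+1 => ((-1) ^+ k *+ 'C(N, k)) *: (W ^+ N * F))).
    rewrite -scaler_suml.
    have -> : \sum_(i < N.+1) (-1) ^+ i *+ 'C(N, i) = (1 + (-1)) ^+ N :> R.
      by rewrite exprDn; apply: eq_bigr => i _; rewrite expr1n mul1r.
    by rewrite subrr expr0n; case: N nN => // N _; rewrite scale0r.
  move=> k _; rewrite derivn0 mulrA -exprD subnK //; exact: leq_ord.
case: N nN => [//|M] nM.
have h1 : Tn M.+1 n F = 0 by apply: IH; apply: ltnW.
have h2 : Tn M n F = 0 by apply: IH.
have := Tn_rec M n F; rewrite h1 h2 deriv0 mulr0 mul0rn addr0.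
by move=> ->.
Qed.

Lemma derivn_add (p : {poly R}) m n : (p^`(m))^`(n) = p^`(n + m).
Proof. by elim: n => [|n IH]; rewrite ?derivn0 // !derivnS IH. Qed.

Section Q.
Hypothesis hQ : is_Q_algebra R.

Lemma factU n : (n`!)%:R \is a @GRing.unit R.
Proof. by rewrite -(prednK (fact_gt0 n)); apply: hQ. Qed.

Lemma nderivn_inv (p : {poly R}) n : p^`N(n) = ((n`!)%:R)^-1 *: p^`(n).
Proof. by rewrite nderivn_def -scaler_nat scalerA mulVr ?factU // scale1r. Qed.

Definition Lg k : {poly R} := ((-1) ^+ k * ((k`!)%:R)^-1 * (((b * k).+1)%:R)^-1) *:
   (U ^+ (b * k).+1)^`(k).

Lemma EL N : Eg Lg N = if N == 0%N then U else 0.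
Proof.
case: N => [|N].
  by rewrite /Eg big_ord1 /= /Lg muln0 expr0 mul1r nderivn0 derivn0 subnn expr0 mul1r invr1 mulr1 expr1 scale1r.
rewrite /=.
have key : (N.+1)`!%:R *: Eg Lg N.+1 = Tn N.+1 N U^`().
  rewrite /Eg /Tn scaler_sumr; apply: eq_bigr => k _.
  have kN : (k <= N.+1)%N by exact: leq_ord.
  rewrite nderivn_inv /Lg derivnZ derivn_add subnK // derivSn deriv_exp /=.
  rewrite -scaler_nat derivnZ.
  have -> : U^`() * U ^+ (b * k) = W ^+ k * U^`() by rewrite /W -exprM mulrC.
  rewrite -!scalerAr !scalerA; congr (_ *: _).
  have hb := bin_fact kN.
  rewrite -hb !natrM.
  set C := ('C(N.+1, k))%:R; set a := (k`!)%:R; set d := ((N.+1 - k)`!)%:R.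
  set e := ((b * k).+1)%:R.
  have -> : C * (a * d) * (d^-1 * ((-1) ^+ k * a^-1 * e^-1) * e)
     = C * (-1) ^+ k * (a * a^-1) * (d * d^-1) * (e * e^-1) by ring.
  by rewrite !mulrV ?factU ?hQ // !mulr1 mulr_natl.
have h := key; rewrite Tn_zero // in h.
by rewrite -[Eg _ _]scale1r -(mulVr (factU N.+1)) -scalerA h scaler0.
Qed.

Lemma wz (lam N : nat) : ((lam%:Z - N%:Z + 1)%:~R : R) = lam.+1%:R - N%:R.
Proof. by rewrite intrD intrB /= -natr1 addrAC. Qed.

Lemma wlem lam N : U ^+ (N - lam.+1) * (U ^+ lam.+1)^`(N)
  = (lam.+1)%:R *: (U ^+ (lam.+1 - N) * wpoly U lam N).
Proof.
elim: N => [|N IH].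
  by rewrite sub0n expr0 mul1r derivn0 subn0 /= scalerAr scale_polyC mulrV ?hQ // mulr1.
rewrite /= wz.
case: (leqP N lam) => NL.
  have e1 : (N - lam.+1 = 0)%N by apply/eqP; rewrite subn_eq0 ltnW.
  have e2 : (N.+1 - lam.+1 = 0)%N by apply/eqP; rewrite subn_eq0.
  rewrite e1 in IH; rewrite expr0 mul1r in IH; rewrite e2 expr0 mul1r IH.
  rewrite subSS subSn // derivZ derivM deriv_exp /=.
  have -> : (lam.+1%:R - N%:R : R) = (lam - N).+1%:R by rewrite -subSn // natrB // ltnW.
  congr (_ *: _).
  rewrite -mul_polyC -mulr_natr polyC_natr exprS.
  ring.
have e1 : (N.+1 - lam.+1 = (N - lam.+1).+1)%N by rewrite subSn.
have e2 : (lam.+1 - N.+1 = 0)%N by apply/eqP; rewrite subn_eq0 ltnW.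
have e3 : (lam.+1 - N = 0)%N by apply/eqP; rewrite subn_eq0.
rewrite e3 in IH; rewrite expr0 mul1r in IH; rewrite e1 e2 expr0 mul1r.
move: IH; set e := (N - lam.+1)%N => IH.
have hd := congr1 (@deriv R) IH.
rewrite derivM derivZ in hd.
have he : U * (U ^+ e)^`() = (U^`() * U ^+ e) *+ e.
  rewrite deriv_exp; case: (e) => [|e']; first by rewrite !mulr0n mulr0.
  by rewrite /= mulrnAr mulrCA -exprS.
have hN : (lam.+1%:R - N%:R : R) = - e%:R.
  have -> : (N%:R : R) = lam.+1%:R + e%:R by rewrite -natrD /e subnKC.
  by rewrite opprD addrA subrr add0r.
rewrite hN exprS -mulrA.
have -> : U ^+ e * ((U ^+ lam.+1)^`(N))^`() = lam.+1%:R *: (wpoly U lam N)^`() - (U ^+ e)^`() * (U ^+ lam.+1)^`(N).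
  by rewrite -hd addrC addKr.
rewrite mulrBr mulrA he.
rewrite -mulrnAl -mulrA IH.
rewrite !scaler_nat scaleNr scaler_nat.
ring.
Qed.
End Q.
End Main.


Theorem mainTheorem8 (R : comUnitRingType) (a b : nat) (U : {poly R})
    (I : nat -> {poly R}) :
  is_Q_algebra R -> (2 <= a)%N -> (2 <= b)%N -> (size U <= a.+1)%N ->
  is_formal_inverse U b I ->
  forall m n : nat,
    U ^+ ((m + n) - (b * m).+1) * (vcoef U I m)^`(n)
    = ((-1) ^+ m * (m`!%:R)^-1) *:
        (U ^+ ((b * m).+1 - (m + n)) * wpoly U (b * m) (m + n)).
Proof.
move=> hQ _ _ _ H m n.
have hv : vcoef U I m = Lg R U b m.
  exact: (Eg_uniq R U b _ _ _ (Ev R U b I H) (EL R U b hQ) m).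
rewrite hv /Lg derivnZ derivn_add addnC -scalerAr (wlem R U hQ) scalerA.
by rewrite divrK ?hQ.
Qed.
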